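(* Let $G,G'$ be groups, $Q$ a non-empty set, $\alpha\in[0,1]$, and $f:G\to G'$ an anti-homomorphism. Let $\theta$ be a $Q$-fuzzy subset of $G$ such that $\theta^\alpha$ is an $\alpha$-$Q$-fuzzy subgroup of $G$. Then the image $f(\theta^\alpha)$ is an $\alpha$-$Q$-fuzzy subgroup of $G'$, in the sense that $f(\theta^\alpha)(ab,q)\ge\min\{f(\theta^\alpha)(a,q),f(\theta^\alpha)(b,q)\}$ and $f(\theta^\alpha)(a^{-1},q)\ge f(\theta^\alpha)(a,q)$ for all $a,b\in G'$, $q\in Q$.
   Context: A map $f:G\to G'$ between groups is an anti-homomorphism if $f(xy)=f(y)f(x)$ for all $x,y\in G$. A $Q$-fuzzy subset of a group $H$ is a map $H\times Q\to[0,1]$. For $\alpha\in[0,1]$, $\theta^\alpha(x,q)=\min\{\theta(x,q),\alpha\}$. $\theta^\alpha$ is called an $\alpha$-$Q$-fuzzy subgroup of $G$ if $\theta^\alpha(xy,q)\ge\min\{\theta^\alpha(x,q),\theta^\alpha(y,q)\}$ and $\theta^\alpha(x^{-1},q)\ge\theta^\alpha(x,q)$ for all $x,y\in G$, $q\in Q$. The image of a $Q$-fuzzy subset $\mu$ of $G$ is $f(\mu)(x',q)=\sup\{\mu(x,q): x\in G,\ f(x)=x'\}$ (with $\sup\emptyset=0$). *)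

(* Defs.v *)
From HB Require Import structures.
From mathcomp Require Import all_boot all_order all_algebra.
From mathcomp Require Import all_classical all_reals.
Set Implicit Arguments. Unset Strict Implicit. Unset Printing Implicit Defensive.
Import Order.TTheory GRing.Theory Num.Theory.
Local Open Scope classical_set_scope.
Local Open Scope ring_scope.

Definition anti_hom (G G' : groupType) (f : G -> G') : Prop :=
  forall x y : G, f (x * y)%g = (f y * f x)%g.

(* a Q-fuzzy subset of H is a map H -> Q -> [0,1] ; we use R-valued maps plus
   an explicit range hypothesis *)
Definition QFuzzy_range (R : realType) (H Q : Type) (mu : H -> Q -> R) : Prop :=
  forall x q, 0 <= mu x q <= 1.

Definition alpha_cut (R : realType) (H Q : Type) (theta : H -> Q -> R) (alpha : R)
  : H -> Q -> R := fun x q => Num.min (theta x q) alpha.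

Definition is_fuzzy_subgroup_cond (R : realType) (G : groupType) (Q : Type)
  (mu : G -> Q -> R) : Prop :=
  (forall (x y : G) (q : Q), mu (x * y)%g q >= Num.min (mu x q) (mu y q)) /\
  (forall (x : G) (q : Q), mu (x^-1)%g q >= mu x q).

(* image f(mu)(x',q) = sup { mu(x,q) | f x = x' }, with sup of empty set = 0
   (MathComp-Analysis' [sup] satisfies sup set0 = 0). *)
Definition fuzzy_image (R : realType) (G G' : Type) (Q : Type) (f : G -> G')
  (mu : G -> Q -> R) : G' -> Q -> R :=
  fun x' q => sup [set mu x q | x in [set x | f x = x']].

(* Main.v *)
Require Import Defs.
From HB Require Import structures.
From mathcomp Require Import all_boot all_order all_algebra.
From mathcomp Require Import all_classical all_reals.
Import Order.TTheory GRing.Theory Num.Theory.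
Local Open Scope ring_scope.
Local Open Scope classical_set_scope.

Section H.
Variables (R : realType) (G G' : groupType) (Q : Type) (f : G -> G').
Variable mu : G -> Q -> R.
Hypothesis mu_ge0 : forall x q, 0 <= mu x q.
Hypothesis mu_le1 : forall x q, mu x q <= 1.

Let img x' q := [set mu x q | x in [set x | f x = x']].

Lemma img_ub x' q : has_ubound (img x' q).
Proof. by exists 1 => _ [x _ <-]. Qed.

Lemma L0 x' q : 0 <= fuzzy_image f mu x' q.
Proof.
rewrite /fuzzy_image.
case: (pselect (exists x, f x = x')) => [[x hx]|].
  apply: (le_trans (mu_ge0 x q)); apply: ub_le_sup; first exact: img_ub.
  by exists x.
move=> hn.
have -> : [set mu x q | x in [set x | f x = x']] = set0.
  apply/seteqP; split => // y [x hx _]; apply: hn; by exists x.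
by rewrite sup0.
Qed.

Lemma Lub x q : mu x q <= fuzzy_image f mu (f x) q.
Proof. by apply: ub_le_sup; [exact: img_ub| exists x]. Qed.

Lemma Lgt x' q c : 0 <= c -> c < fuzzy_image f mu x' q ->
  exists x, f x = x' /\ c < mu x q.
Proof.
move=> c0 hc.
case: (pselect (exists x, f x = x')) => [[x hx]|hn].
  have [_ [y hy <-] hlt] := sup_gt (S := img x' q) (ex_intro _ (mu x q) (ex_intro2 _ _ x hx erefl)) hc.
  by exists y.
move: hc; rewrite /fuzzy_image.
have -> : [set mu x q | x in [set x | f x = x']] = set0.
  apply/seteqP; split => // y [x hx _]; apply: hn; by exists x.
by rewrite sup0 ltNge c0.
Qed.

End H.

Theorem proposition5p2 (R : realType) (G G' : groupType) (Q : Type)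
  (Qne : inhabited Q) (alpha : R) (halpha : 0 <= alpha <= 1)
  (f : G -> G') (hf : anti_hom f)
  (theta : G -> Q -> R) (htheta : QFuzzy_range theta)
  (hsub : is_fuzzy_subgroup_cond (alpha_cut theta alpha)) :
  is_fuzzy_subgroup_cond (fuzzy_image f (alpha_cut theta alpha)).
Proof.
case/andP: halpha => a0 a1.
set mu := alpha_cut theta alpha.
have ge0 : forall x q, 0 <= mu x q.
  by move=> x q; rewrite /mu /alpha_cut le_min a0 andbT; case/andP: (htheta x q).
have le1 : forall x q, mu x q <= 1.
  by move=> x q; rewrite /mu /alpha_cut ge_min a1 orbT.
case: hsub => hM hV.
have f1 : f 1%g = 1%g.
  have h := hf 1%g 1%g; rewrite mulg1 in h.
  by apply: (mulgI (f 1%g)); rewrite mulg1 -h.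
have fV : forall x, f x^-1%g = (f x)^-1%g.
  move=> x; have h := hf x^-1%g x; rewrite mulVg f1 in h.
  by apply: (mulgI (f x)); rewrite mulgV h.
split.
- move=> a b q; rewrite leNgt; apply/negP => hlt.
  have c0 := @L0 _ _ _ _ f _ ge0 le1 (a * b)%g q.
  have := hlt; rewrite lt_min => /andP [ha hb].
  have [x [hx hmx]] := @Lgt _ _ _ _ f _ _ _ _ c0 ha.
  have [y [hy hmy]] := @Lgt _ _ _ _ f _ _ _ _ c0 hb.
  have := @Lub _ _ _ _ f _ le1 (y * x)%g q; rewrite hf hx hy.
  move=> hle; have := le_trans (hM y x q) hle.
  rewrite ge_min => /orP [] h.
    by move: hmy; rewrite ltNge h.
  by move: hmx; rewrite ltNge h.
- move=> a q; rewrite leNgt; apply/negP => hlt.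
  have c0 := @L0 _ _ _ _ f _ ge0 le1 (a^-1)%g q.
  have [x [hx hmx]] := @Lgt _ _ _ _ f _ _ _ _ c0 hlt.
  have := le_trans (hV x q) (@Lub _ _ _ _ f _ le1 (x^-1)%g q).
  by rewrite fV hx => h; move: hmx; rewrite ltNge h.
Qed.
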